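(* Let $\mathcal{M}=(V,\{A_i\}_{i\in V},P)$ be a finite Markov decision process with state set $V=\{1,\dots,n\}$, nonempty finite action sets $A_i$, and transition probabilities $P(i,a,j)\ge 0$ with $\sum_{j=1}^n P(i,a,j)=1$ for all $i\in V$, $a\in A_i$. Let $R\subseteq V$ and $S\subseteq V\setminus R$, and let $\rho>n$. Consider the linear programs $$\text{(LP1)}\quad \min_{\mathbf{x}\in\mathbb{R}^n}\ \mathbf{1}^T\mathbf{x}\ \text{ s.t. } \mathbf{x}\in[0,1]^n,\ x_i=1\ \forall i\in S,\ x_i=0\ \forall i\in R,\ x_i\ge \sum_{j=1}^n P(i,a,j)x_j\ \forall i\in V\setminus R,\ a\in A_i,$$ $$\text{(LP2)}\quad \min_{\mathbf{x}\in\mathbb{R}^n}\ \mathbf{1}^T\mathbf{x}+\rho\sum_{i\in S}(1-x_i)\ \text{ s.t. } \mathbf{x}\in[0,1]^n,\ x_i=0\ \forall i\in R,\ x_i\ge \sum_{j=1}^n P(i,a,j)x_j\ \forall i\in V\setminus R,\ a\in A_i.$$ Then (LP1) and (LP2) have the same optimal value and the same set of optimal solutions.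
   Context: Here $\mathbf{1}$ denotes the all-ones vector in $\mathbb{R}^n$. *)

(* Defs.v *)
From HB Require Import structures.
From mathcomp Require Import all_boot all_order all_algebra.
Set Implicit Arguments. Unset Strict Implicit. Unset Printing Implicit Defensive.
Import Order.TTheory GRing.Theory Num.Theory.
Local Open Scope ring_scope.

Definition is_MDP (R : realFieldType) (n : nat) (A : 'I_n -> finType)
  (P : forall i : 'I_n, A i -> 'I_n -> R) : Prop :=
  (forall i : 'I_n, 0 < #|A i|)%N /\
  (forall (i : 'I_n) (a : A i) (j : 'I_n), 0 <= P i a j) /\
  (forall (i : 'I_n) (a : A i), \sum_(j < n) P i a j = 1).

Definition common_feas (R : realFieldType) (n : nat) (A : 'I_n -> finType)
  (P : forall i : 'I_n, A i -> 'I_n -> R) (Rs : {set 'I_n}) (x : 'I_n -> R) : Prop :=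
  (forall i, 0 <= x i <= 1) /\
  (forall i, i \in Rs -> x i = 0) /\
  (forall i, i \notin Rs -> forall a : A i, \sum_(j < n) P i a j * x j <= x i).

Definition feas1 (R : realFieldType) (n : nat) (A : 'I_n -> finType)
  (P : forall i : 'I_n, A i -> 'I_n -> R) (Rs S : {set 'I_n}) (x : 'I_n -> R) : Prop :=
  common_feas P Rs x /\ (forall i, i \in S -> x i = 1).

Definition feas2 (R : realFieldType) (n : nat) (A : 'I_n -> finType)
  (P : forall i : 'I_n, A i -> 'I_n -> R) (Rs : {set 'I_n}) (x : 'I_n -> R) : Prop :=
  common_feas P Rs x.

Definition obj1 (R : realFieldType) (n : nat) (x : 'I_n -> R) : R := \sum_(i < n) x i.

Definition obj2 (R : realFieldType) (n : nat) (rho : R) (S : {set 'I_n})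
  (x : 'I_n -> R) : R := \sum_(i < n) x i + rho * \sum_(i in S) (1 - x i).

Definition is_opt_value (R : realFieldType) (n : nat) (feas : ('I_n -> R) -> Prop)
  (obj : ('I_n -> R) -> R) (v : R) : Prop :=
  (forall y, feas y -> v <= obj y) /\
  (forall w, (forall y, feas y -> w <= obj y) -> w <= v).

Definition is_opt_sol (R : realFieldType) (n : nat) (feas : ('I_n -> R) -> Prop)
  (obj : ('I_n -> R) -> R) (x : 'I_n -> R) : Prop :=
  feas x /\ (forall y, feas y -> obj x <= obj y).

(* Main.v *)
Require Import Defs.
From HB Require Import structures.
From mathcomp Require Import all_boot all_order all_algebra.
From mathcomp Require Import ring lra.
Set Implicit Arguments. Unset Strict Implicit. Unset Printing Implicit Defensive.
Import Order.TTheory GRing.Theory Num.Theory.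
Local Open Scope ring_scope.

Lemma all_flat (T : Type) (a : pred T) (s : seq (seq T)) :
  all a (flatten s) = all (all a) s.
Proof. by elim: s => //= x s IH; rewrite all_cat IH. Qed.

Lemma interval_pick (R : realDomainType) (Ls Us : seq R) :
  all (fun l => all (fun u => l <= u) Us) Ls ->
  exists t, all (fun l => l <= t) Ls /\ all (fun u => t <= u) Us.
Proof.
elim: Ls => [_|l Ls IH /= /andP[hl hLs]].
  elim: Us => [|u Us [t [_ ht]]]; first by exists 0.
  exists (Num.min u t); split => //=; rewrite ge_min lexx /=.
  by apply: sub_all ht => v hv /=; rewrite ge_min hv orbT.
case: (IH hLs) => t [h1 h2]; exists (Num.max l t); split => /=.
  rewrite le_max lexx /=; by apply: sub_all h1 => v hv /=; rewrite le_max hv orbT.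
move: (introT andP (conj hl h2)); rewrite -all_predI.
by apply: sub_all => u /andP[a b] /=; rewrite ge_max a b.
Qed.

Definition sat (R : realFieldType) (m : nat) (x : nat -> R) (c : (nat -> R) * R) : bool :=
  c.2 <= \sum_(j < m) c.1 j * x j.

Definition comb (R : realFieldType) (m : nat) (p q : (nat -> R) * R) : (nat -> R) * R :=
  ((fun j => - q.1 m * p.1 j + p.1 m * q.1 j), - q.1 m * p.2 + p.1 m * q.2).

Definition fm (R : realFieldType) (m : nat) (L : seq ((nat -> R) * R)) :=
  [seq c <- L | c.1 m == 0] ++
  flatten [seq [seq comb m p q | q <- [seq c <- L | c.1 m < 0]] | p <- [seq c <- L | 0 < c.1 m]].

Lemma sat_S (R : realFieldType) m (x : nat -> R) c :
  sat m.+1 x c = (c.2 <= \sum_(j < m) c.1 j * x j + c.1 m * x m).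
Proof. by rewrite /sat big_ord_recr. Qed.

Lemma sat_comb (R : realFieldType) m (x : nat -> R) p q :
  sat m x (comb m p q) = (- q.1 m * p.2 + p.1 m * q.2 <=
     - q.1 m * (\sum_(j < m) p.1 j * x j) + p.1 m * (\sum_(j < m) q.1 j * x j)).
Proof.
rewrite /sat /= !mulr_sumr -big_split /=; congr (_ <= _); apply: eq_bigr => j _; ring.
Qed.

Lemma fm_fwd (R : realFieldType) m (x : nat -> R) L :
  all (sat m.+1 x) L -> all (sat m x) (fm m L).
Proof.
move=> h; rewrite all_cat; apply/andP; split.
  rewrite all_filter; apply: sub_all h => c /=; rewrite sat_S => hc.
  by apply/implyP => /eqP e; rewrite e mul0r addr0 in hc.
rewrite all_flat all_map.
have hp : all (fun p => (0 < p.1 m) && sat m.+1 x p) [seq c <- L | 0 < c.1 m].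
  by rewrite all_filter; apply: sub_all h => c hc; apply/implyP => ->.
have hq : all (fun p => (p.1 m < 0) && sat m.+1 x p) [seq c <- L | c.1 m < 0].
  by rewrite all_filter; apply: sub_all h => c hc; apply/implyP => ->.
apply: sub_all hp => p /andP[p0 hp'] /=; rewrite all_map.
apply: sub_all hq => q /andP[q0 hq'] /=; rewrite sat_comb.
rewrite !sat_S in hp' hq'.
move: hp' hq' p0 q0.
set Sp := \sum_(j < m) _. set Sq := \sum_(j < m) _.
move=> hp' hq' p0 q0. nra.
Qed.

Lemma key (R : realFieldType) (a b c d e f : R) : 0 < e -> f < 0 ->
  -f*(a*e+c) + e*(b*f+d) <= -f*c + e*d -> a <= b.
Proof. move=> he hf h. have h' : 0 < e * - f by rewrite mulr_gt0 // oppr_gt0. nra. Qed.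
Lemma keyn (R : realFieldType) (a b e t : R) : e < 0 -> t <= a -> a * e + b <= b + e * t.
Proof. move=> *; nra. Qed.
Lemma keyp (R : realFieldType) (a b e t : R) : 0 < e -> a <= t -> a * e + b <= b + e * t.
Proof. move=> *; nra. Qed.

Lemma fm_bwd (R : realFieldType) m (x : nat -> R) L :
  all (sat m x) (fm m L) ->
  exists t, all (sat m.+1 (fun j => if j == m then t else x j)) L.
Proof.
pose S (c : (nat -> R) * R) := \sum_(j < m) c.1 j * x j.
pose lo (c : (nat -> R) * R) := (c.2 - S c) / c.1 m.
have elo : forall c, c.1 m != 0 -> c.2 = lo c * c.1 m + S c.
  by move=> c hc; rewrite /lo divfK // subrK.
rewrite all_cat => /andP[hz hc].
rewrite all_flat all_map in hc.
have hpos := filter_all (fun c => 0 < c.1 m) L.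
have hneg := filter_all (fun c => c.1 m < 0) L.
have := @interval_pick _ (map lo [seq c <- L | 0 < c.1 m]) (map lo [seq c <- L | c.1 m < 0]).
case.
  rewrite all_map; move: (introT andP (conj hc hpos)); rewrite -all_predI.
  apply: sub_all => p /andP[/= hp p0]; rewrite all_map; rewrite all_map in hp.
  move: (introT andP (conj hp hneg)); rewrite -all_predI.
  apply: sub_all => q /andP[/= hpq q0] /=; rewrite sat_comb in hpq.
  move: hpq; rewrite (elo p) ?gt_eqF // (elo q) ?lt_eqF //.
  rewrite -/(S p) -/(S q).
  by move=> hh; apply: (key p0 q0 hh).
move=> t [hl hu]; exists t.
have eqS : forall c, sat m.+1 (fun j => if j == m then t else x j) c = (c.2 <= S c + c.1 m * t).
  move=> c; rewrite sat_S eqxx; congr (_ <= _ + _); apply: eq_bigr => j _.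
  by rewrite ltn_eqF.
rewrite all_map all_filter in hl; rewrite all_map all_filter in hu.
rewrite all_filter in hz.
move: (introT andP (conj (introT andP (conj hz hl)) hu)); rewrite -!all_predI.
apply: sub_all => c /andP[/andP[/= hzc hlc] huc]; rewrite eqS.
case: (ltgtP (c.1 m) 0) => [neg|pos|zero].
- rewrite neg /= in huc; rewrite (elo c) ?lt_eqF //.
  by move: neg huc; apply: keyn.
- rewrite pos /= in hlc; rewrite (elo c) ?gt_eqF //.
  by move: pos hlc; apply: keyp.
- by rewrite zero eqxx /= in hzc; rewrite zero mul0r addr0.
Qed.

Fixpoint fmk (R : realFieldType) (k : nat) (L : seq ((nat -> R) * R)) :=
  match k with 0 => L | k'.+1 => fmk k' (fm k L) end.

Lemma fmk_fwd (R : realFieldType) k L (x : nat -> R) :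
  all (sat k.+1 x) L -> all (sat 1 x) (fmk k L).
Proof. by elim: k L => //= k IH L h; apply: IH; apply: fm_fwd. Qed.

Lemma fmk_bwd (R : realFieldType) k L (x : nat -> R) :
  all (sat 1 x) (fmk k L) -> exists y, y 0%N = x 0%N /\ all (sat k.+1 y) L.
Proof.
elim: k L x => [|k IH] L x /= h; first by exists x.
case: (IH _ _ h) => y [y0 hy]; case: (fm_bwd hy) => t ht.
by exists (fun j => if j == k.+1 then t else y j).
Qed.

Lemma foldr_max_ge (R : realDomainType) (x0 : R) s :
  x0 <= foldr Num.max x0 s /\ all (fun r => r <= foldr Num.max x0 s) s.
Proof.
elim: s => [|r s [h1 h2]] /=; first by rewrite lexx.
split; first by rewrite le_max h1 orbT.
rewrite le_max lexx /=; apply: sub_all h2 => u hu /=; by rewrite le_max hu orbT.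
Qed.

Lemma foldr_max_le (R : realDomainType) (x0 t : R) s :
  x0 <= t -> all (fun r => r <= t) s -> foldr Num.max x0 s <= t.
Proof. by move=> h0; elim: s => //= r s IH /andP[hr hs]; rewrite ge_max hr IH. Qed.

Lemma keyw (R : realFieldType) (b a t0 tm : R) : b <= a * t0 -> a <= 0 -> tm <= t0 -> b <= a * tm.
Proof. move=> *; nra. Qed.

Lemma min1d (R : realFieldType) (L : seq ((nat -> R) * R)) t0 lb :
  all (fun c => c.2 <= c.1 0%N * t0) L ->
  (forall t, all (fun c => c.2 <= c.1 0%N * t) L -> lb <= t) ->
  exists tm, all (fun c => c.2 <= c.1 0%N * tm) L /\
    (forall t, all (fun c => c.2 <= c.1 0%N * t) L -> tm <= t).
Proof.
move=> h0 hlb.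
case E: [seq c <- L | 0 < c.1 0%N] => [|p Ps].
  exfalso.
  have hn : all (fun c => c.1 0%N <= 0) L.
    have : all pred0 [seq c <- L | 0 < c.1 0%N] by rewrite E.
    rewrite all_filter; apply: sub_all => c /= /implyP h.
    by rewrite leNgt; apply/negP => /h.
  set t := Num.min t0 (lb - 1).
  have ht : all (fun c => c.2 <= c.1 0%N * t) L.
    move: (introT andP (conj h0 hn)); rewrite -all_predI.
    apply: sub_all => c /andP[h1 h2] /=; apply: (keyw h1 h2).
    by rewrite ge_min lexx.
  have h3 := hlb _ ht; have h4 : t <= lb - 1 by rewrite ge_min lexx orbT.
  by have := le_trans h3 h4; rewrite lerDl oppr_ge0 ler10.
set tm := foldr Num.max (p.2 / p.1 0%N) [seq c.2 / c.1 0%N | c <- Ps].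
have key : forall t, all (fun c => c.2 <= c.1 0%N * t) L -> tm <= t.
  move=> t ht.
  have : all (fun c => c.2 / c.1 0%N <= t) (p :: Ps).
    rewrite -E all_filter; apply: sub_all ht => c hc; apply/implyP => pc.
    by rewrite ler_pdivrMr // mulrC.
  move=> /= /andP[hp hps]; apply: foldr_max_le => //; by rewrite all_map.
exists tm; split => //.
have ht0 := key t0 h0.
have hall : all (fun c => c.2 / c.1 0%N <= tm) [seq c <- L | 0 < c.1 0%N].
  rewrite E /=; have [g1 g2] := foldr_max_ge (p.2 / p.1 0%N) [seq c.2 / c.1 0%N | c <- Ps].
  by rewrite g1 /=; rewrite all_map in g2.
rewrite all_filter in hall.
move: (introT andP (conj h0 hall)); rewrite -all_predI.
apply: sub_all => c /andP[/= h1 h2].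
case: (ltP 0 (c.1 0%N)) => pc.
  by rewrite pc /= ler_pdivrMr // mulrC in h2.
by move: h1 pc ht0; apply: (@keyw R).
Qed.

Lemma sat1 (R : realFieldType) (y : nat -> R) c : sat 1 y c = (c.2 <= c.1 0%N * y 0%N).
Proof. by rewrite /sat big_ord1. Qed.

Definition mk (R : realFieldType) n (c0 : R) (a : 'I_n -> R) (b : R) : (nat -> R) * R :=
  (fun k => match k with 0 => c0 | k'.+1 => oapp a 0 (insub k' : option 'I_n) end, b).

Lemma sat_mk (R : realFieldType) n c0 (a : 'I_n -> R) b (y : nat -> R) :
  sat n.+1 y (mk c0 a b) = (b <= c0 * y 0%N + \sum_(i < n) a i * y i.+1).
Proof.
rewrite /sat big_ord_recl /=; congr (_ <= _ + _); apply: eq_bigr => i _ /=.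
by rewrite /bump /= add1n valK.
Qed.

Lemma sum_delta (R : realFieldType) n (i : 'I_n) (f : 'I_n -> R) :
  \sum_j (j == i)%:R * f j = f i.
Proof.
rewrite (bigD1 i) //= eqxx mul1r big1 ?addr0 // => j /negbTE ->; by rewrite mul0r.
Qed.

Definition sys1 (R : realFieldType) n (A : 'I_n -> finType)
  (P : forall i : 'I_n, A i -> 'I_n -> R) (Rs S : {set 'I_n}) :=
  [seq mk 0 (fun j => (j == i)%:R) 0 | i <- enum [set: 'I_n]] ++
  [seq mk 0 (fun j => - (j == i)%:R) (-1) | i <- enum [set: 'I_n]] ++
  [seq mk 0 (fun j => - (j == i)%:R) 0 | i <- enum Rs] ++
  [seq mk 0 (fun j => (j == i)%:R) 1 | i <- enum S] ++
  flatten [seq [seq mk 0 (fun j => (j == i)%:R - P i a j) 0 | a <- enum (A i)]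
          | i <- enum (~: Rs)] ++
  [:: mk 1 (fun _ : 'I_n => -1) 0].

Lemma all_enum (T : finType) (A : {pred T}) (p : pred T) :
  reflect (forall x, x \in A -> p x) (all p (enum A)).
Proof.
apply: (iffP allP) => h x; first by move=> hx; apply: h; rewrite mem_enum.
by rewrite mem_enum; exact: h.
Qed.

Lemma all_enumT1 (T : finType) (p : pred T) :
  all p (enum T) -> forall x, p x.
Proof. by move/allP => h x; apply: h; rewrite mem_enum. Qed.
Lemma all_enumT2 (T : finType) (p : pred T) :
  (forall x, p x) -> all p (enum T).
Proof. by move=> h; apply/allP => x _; exact: h. Qed.

Lemma sys1_spec (R : realFieldType) n (A : 'I_n -> finType)
  (P : forall i : 'I_n, A i -> 'I_n -> R) (Rs S : {set 'I_n}) (y : nat -> R) :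
  all (sat n.+1 y) (sys1 P Rs S) <->
  feas1 P Rs S (fun i => y i.+1) /\ \sum_(i < n) y i.+1 <= y 0%N.
Proof.
have s_pos : forall i b, sat n.+1 y (mk 0 (fun j : 'I_n => (j == i)%:R) b) = (b <= y i.+1).
  by move=> i b; rewrite sat_mk mul0r add0r (sum_delta i (fun j => y j.+1)).
have s_neg : forall i b, sat n.+1 y (mk 0 (fun j : 'I_n => - (j == i)%:R) b) = (b <= - y i.+1).
  move=> i b; rewrite sat_mk mul0r add0r.
  under eq_bigr do rewrite mulNr.
  by rewrite sumrN (sum_delta i (fun j => y j.+1)).
have s_sh : forall i a, sat n.+1 y (mk 0 (fun j : 'I_n => (j == i)%:R - P i a j) 0) =
    (\sum_j P i a j * y j.+1 <= y i.+1).
  move=> i a; rewrite sat_mk mul0r add0r.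
  under eq_bigr do rewrite mulrBl.
  by rewrite sumrB (sum_delta i (fun j => y j.+1)) subr_ge0.
have s_obj : sat n.+1 y (mk 1 (fun _ : 'I_n => -1) 0) = (\sum_(i < n) y i.+1 <= y 0%N).
  rewrite sat_mk mul1r.
  under eq_bigr do rewrite mulN1r.
  by rewrite sumrN subr_ge0.
rewrite /sys1 !all_cat all_flat !all_map all_seq1.
split.
  move=> /andP[/all_enum h1 /andP[/all_enum h2 /andP[/all_enum h3 /andP[/all_enum h4
    /andP[/all_enum h5 h6]]]]].
  rewrite s_obj in h6; split => //.
  have H1 : forall i : 'I_n, 0 <= y i.+1 by move=> i; have := h1 i (in_setT i); rewrite /= s_pos.
  have H2 : forall i : 'I_n, y i.+1 <= 1.
    by move=> i; have := h2 i (in_setT i); rewrite /= s_neg lerN2.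
  split; first split.
  - by move=> i; rewrite H1 H2.
  - split.
      move=> i hi; have := h3 i hi; rewrite /= s_neg oppr_ge0 => hh.
      by apply/eqP; rewrite eq_le hh H1.
    move=> i hi a; have := h5 i; rewrite inE hi => /(_ isT) /=.
    rewrite all_map => /all_enum /(_ a) /=; rewrite s_sh; apply; by [].
  - move=> i hi; have := h4 i hi; rewrite /= s_pos => hh.
    by apply/eqP; rewrite eq_le hh H2.
move=> [[[hb [hr hs]] h1] h0].
apply/andP; split.
  by apply/all_enum => i _ /=; rewrite s_pos; case/andP: (hb i).
apply/andP; split.
  by apply/all_enum => i _ /=; rewrite s_neg lerN2; case/andP: (hb i).
apply/andP; split.
  by apply/all_enum => i hi /=; rewrite s_neg (hr i hi) oppr0.
apply/andP; split.
  by apply/all_enum => i hi /=; rewrite s_pos (h1 i hi).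
apply/andP; split; last by rewrite s_obj.
apply/all_enum => i; rewrite inE => hi /=; rewrite all_map.
by apply/all_enum => a _ /=; rewrite s_sh; apply: hs.
Qed.

Lemma feas1_ext (R : realFieldType) n (A : 'I_n -> finType)
  (P : forall i : 'I_n, A i -> 'I_n -> R) (Rs S : {set 'I_n}) (x x' : 'I_n -> R) :
  (forall i, x i = x' i) -> feas1 P Rs S x -> feas1 P Rs S x'.
Proof.
move=> e [[hb [hr hs]] h1]; split; first split.
- by move=> i; rewrite -e.
- split; first by move=> i hi; rewrite -e hr.
  move=> i hi a; rewrite -e; under eq_bigr do rewrite -e; exact: hs.
- by move=> i hi; rewrite -e h1.
Qed.

Definition ext (R : realFieldType) n (t : R) (x : 'I_n -> R) : nat -> R :=
  fun k => match k with 0 => t | k'.+1 => oapp x 0 (insub k' : option 'I_n) end.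

Lemma extE (R : realFieldType) n (t : R) (x : 'I_n -> R) (i : 'I_n) : ext t x i.+1 = x i.
Proof. by rewrite /ext /= valK. Qed.

Lemma exists_opt1 (R : realFieldType) (n : nat) (A : 'I_n -> finType)
  (P : forall i : 'I_n, A i -> 'I_n -> R) (Rs S : {set 'I_n}) :
  is_MDP P -> [disjoint S & Rs] ->
  exists v : R, is_opt_value (feas1 P Rs S) (@obj1 R n) v.
Proof.
move=> [_ [hP0 hP1]] hdis.
pose L := fmk n (sys1 P Rs S).
have fwd : forall x, feas1 P Rs S x -> all (fun c => c.2 <= c.1 0%N * obj1 x) L.
  move=> x hx.
  have : all (sat n.+1 (ext (obj1 x) x)) (sys1 P Rs S).
    apply/sys1_spec; split; first by apply: feas1_ext hx => i; rewrite extE.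
    by rewrite /obj1; under eq_bigr do rewrite extE.
  move/fmk_fwd; apply: sub_all => c; by rewrite sat1.
have bwd : forall t, all (fun c => c.2 <= c.1 0%N * t) L ->
    exists x, feas1 P Rs S x /\ obj1 x <= t.
  move=> t ht.
  have : all (sat 1 (fun _ => t)) L by apply: sub_all ht => c; rewrite sat1.
  case/fmk_bwd => Y [Y0 /sys1_spec [hf hs]].
  by exists (fun i => Y i.+1); split => //; rewrite -Y0.
pose x0 := fun i : 'I_n => if i \in Rs then 0 else 1 : R.
have hx0 : feas1 P Rs S x0.
  split; first split.
  - by move=> i; rewrite /x0; case: ifP => _; rewrite ?lexx ?ler01.
  - split; first by move=> i hi; rewrite /x0 hi.
    move=> i hi a; rewrite /x0 (negbTE hi).
    rewrite -[X in _ <= X](hP1 i a); apply: ler_sum => j _.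
    have := hP0 i a j; case: ifP => _ h; rewrite ?mulr0 ?mulr1 //.
  - by move=> i hi; rewrite /x0 (disjointFr hdis hi).
have [tm [htm hmin]] : exists tm, all (fun c => c.2 <= c.1 0%N * tm) L /\
    (forall t, all (fun c => c.2 <= c.1 0%N * t) L -> tm <= t).
  apply: (min1d (t0 := obj1 x0) (lb := 0)); first exact: fwd.
  move=> t /bwd [x [[[hb _] _] hle]]; apply: le_trans hle.
  by apply: sumr_ge0 => i _; case/andP: (hb i).
exists tm; split.
  by move=> y hy; apply: hmin; apply: fwd.
move=> w hw; case: (bwd _ htm) => x [hx hle]; exact: le_trans (hw _ hx) hle.
Qed.

Lemma lp2_key (R : realFieldType) (n : nat) (A : 'I_n -> finType)
  (P : forall i : 'I_n, A i -> 'I_n -> R) (Rs S : {set 'I_n}) (rho : R) :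
  is_MDP P -> [disjoint S & Rs] -> n%:R < rho ->
  forall y, feas2 P Rs y -> exists z, feas1 P Rs S z /\ obj1 z <= obj2 rho S y /\
    (obj2 rho S y <= obj1 z -> forall i, i \in S -> y i = 1).
Proof.
move=> [_ [hP0 hP1]] hdis hrho y [hb [hr hs]].
pose d := \sum_(i in S) (1 - y i).
have hterm : forall i, 0 <= 1 - y i by move=> i; rewrite subr_ge0; case/andP: (hb i).
have hd0 : 0 <= d by apply: sumr_ge0.
have hdi : forall i, i \in S -> 1 - y i <= d.
  move=> i hi; rewrite /d (bigD1 i) //= lerDl; apply: sumr_ge0 => j _; exact: hterm.
pose z := fun i => if i \in Rs then 0 else Num.min 1 (y i + d).
have hz1 : forall i, z i <= 1 by move=> i; rewrite /z; case: ifP; rewrite ?ler01 // ge_min lexx.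
have hzy : forall i, z i <= y i + d.
  move=> i; rewrite /z; case: ifP => h; first by rewrite hr // add0r.
  by rewrite ge_min lexx orbT.
have hz0 : forall i, 0 <= z i.
  move=> i; rewrite /z; case: ifP => _ //; rewrite le_min ler01 /=.
  by apply: addr_ge0 => //; case/andP: (hb i).
have hf : feas1 P Rs S z.
split; first split.
- by move=> i; rewrite hz0 hz1.
- split; first by move=> i hi; rewrite /z hi.
  move=> i hi a; rewrite /z (negbTE hi) le_min; apply/andP; split.
    rewrite -[X in _ <= X](hP1 i a); apply: ler_sum => j _.
    by rewrite -{2}(mulr1 (P i a j)); apply: ler_wpM2l => //; exact: hz1.
  apply: (@le_trans _ _ (\sum_j P i a j * (y j + d))).
    by apply: ler_sum => j _; apply: ler_wpM2l => //; exact: hzy.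
  under eq_bigr do rewrite mulrDr.
  by rewrite big_split /= -mulr_suml hP1 mul1r lerD2r; apply: hs.
- move=> i hi; rewrite /z (disjointFr hdis hi); apply: min_l.
  by have := hdi i hi; rewrite lerBlDr addrC.
exists z; split => //.
have hsum : obj1 z <= \sum_(i < n) y i + d * n%:R.
  rewrite /obj1; apply: (@le_trans _ _ (\sum_(i < n) (y i + d))).
    by apply: ler_sum => i _.
  by rewrite big_split /= sumr_const card_ord mulr_natr.
have key : \sum_(i < n) y i + d * n%:R <= obj2 rho S y - (rho - n%:R) * d.
  rewrite /obj2 -/d; lra.
have hprod : 0 <= (rho - n%:R) * d by apply: mulr_ge0 => //; rewrite subr_ge0 ltW.
split.
  apply: le_trans hsum _; apply: le_trans key _.
  by rewrite -[X in _ <= X](addr0 (obj2 rho S y)) lerD2l oppr_le0.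
move=> hle.
have hd : d = 0.
  have h1 : (rho - n%:R) * d <= 0.
    have := le_trans hle (le_trans hsum key).
    by rewrite -{1}(addr0 (obj2 rho S y)) lerD2l oppr_ge0.
  have hr0 : 0 < rho - n%:R by rewrite subr_gt0.
  apply/eqP; rewrite eq_le hd0 andbT.
  by rewrite -(pmulr_rle0 _ hr0).
move=> i hi; have := psumr_eq0P (fun j _ => hterm j) hd hi.
by move/eqP; rewrite subr_eq0 => /eqP <-.
Qed.

Lemma obj21 (R : realFieldType) (n : nat) (rho : R) (S : {set 'I_n}) (x : 'I_n -> R) :
  (forall i, i \in S -> x i = 1) -> obj2 rho S x = obj1 x.
Proof.
by move=> h; rewrite /obj2 /obj1 [X in rho * X]big1 ?mulr0 ?addr0 // => i hi; rewrite h // subrr.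
Qed.

Theorem lemma3 (R : realFieldType) (n : nat) (A : 'I_n -> finType)
  (P : forall i : 'I_n, A i -> 'I_n -> R) (Rs S : {set 'I_n}) (rho : R) :
  is_MDP P ->
  [disjoint S & Rs] ->
  n%:R < rho ->
  (exists v : R, is_opt_value (feas1 P Rs S) (@obj1 R n) v /\
                 is_opt_value (feas2 P Rs) (obj2 rho S) v) /\
  (forall v : R, is_opt_value (feas1 P Rs S) (@obj1 R n) v <->
                 is_opt_value (feas2 P Rs) (obj2 rho S) v) /\
  (forall x : 'I_n -> R, is_opt_sol (feas1 P Rs S) (@obj1 R n) x <->
                         is_opt_sol (feas2 P Rs) (obj2 rho S) x).
Proof.
move=> hM hdis hrho.
have key := lp2_key hM hdis hrho.
have f12 : forall x, feas1 P Rs S x -> feas2 P Rs x by move=> x [].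
have o12 : forall x, feas1 P Rs S x -> obj2 rho S x = obj1 x.
  by move=> x [_ h]; apply: obj21.
have V12 : forall v, is_opt_value (feas1 P Rs S) (@obj1 R n) v ->
                     is_opt_value (feas2 P Rs) (obj2 rho S) v.
  move=> v [hl hg]; split.
    move=> y hy; case: (key y hy) => z [hz [hle _]]; exact: le_trans (hl _ hz) hle.
  move=> w hw; apply: hg => y hy; rewrite -o12 //; apply: hw; exact: f12.
have V21 : forall v, is_opt_value (feas2 P Rs) (obj2 rho S) v ->
                     is_opt_value (feas1 P Rs S) (@obj1 R n) v.
  move=> v [hl hg]; split.
    by move=> y hy; rewrite -o12 //; apply: hl; apply: f12.
  move=> w hw; apply: hg => y hy; case: (key y hy) => z [hz [hle _]].
  exact: le_trans (hw _ hz) hle.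
split.
  case: (exists_opt1 hM hdis) => v hv; exists v; split => //; exact: V12.
split; first by move=> v; split; [apply: V12 | apply: V21].
move=> x; split.
  move=> [hx hmin]; split; first exact: f12.
  move=> y hy; case: (key y hy) => z [hz [hle _]].
  by rewrite o12 //; apply: le_trans (hmin _ hz) hle.
move=> [hx hmin].
case: (key x hx) => z [hz [_ heq]].
have hS : forall i, i \in S -> x i = 1.
  apply: heq; rewrite -o12 //; apply: hmin; exact: f12.
have hx1 : feas1 P Rs S x by split.
split => // y hy; rewrite -!o12 //; apply: hmin; exact: f12.
Qed.
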